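(* Let $p,q$ be distinct primes, $n\geqslant1$, and let $S$ be a minimal generating set for a $C_{p^nq}$-transfer system. Let $T$, $B$ and $D$ be the numbers of top, bottom and diagonal arrows in $S$, respectively. Then: (1) $T+B\leqslant n$, and if $T+B=n$ then $\langle S\rangle$ contains the arrow $(0,0;n,0)$; (2) $T+D\leqslant n+1$, and if $T+D=n+1$ then $\langle S\rangle$ contains the arrow $(0,0;n,1)$; (3) $B+D\leqslant n+1$, and if $B+D=n+1$ then $\langle S\rangle$ contains the arrow $(0,0;n,0)$.
   Context: For a finite group $G$, an arrow is a pair $(H,K)$ of subgroups with $H\leqslant K$; identity arrows are those with $H=K$. A $G$-transfer system is a set of arrows containing all identities and closed under composition ($(H,K),(K,L)\Rightarrow(H,L)$), conjugation ($(H,K)\Rightarrow(gHg^{-1},gKg^{-1})$) and restriction ($(H,K)$ and $L\leqslant K\Rightarrow(H\cap L,L)$). For a set $S$ of non-identity arrows, $\langle S\rangle$ is the smallest transfer system containing $S$; $S$ is a minimal generating set of $\mathsf{T}$ if $\langle S\rangle=\mathsf{T}$ and $\langle S\setminus\{s\}\rangle\neq\mathsf{T}$ for all $s\in S$. In $C_{p^nq}$, $C_{p^aq^x}$ ($0\leqslant a\leqslant n$, $x\in\{0,1\}$) denotes the unique subgroup of order $p^aq^x$, and $(a,x;b,y)$ denotes the arrow $(C_{p^aq^x},C_{p^bq^y})$ (requiring $a\leqslant b$, $x\leqslant y$). Top arrows are those of the form $(i,1;j,1)$ with $i<j$; diagonal arrows are those of the form $(i,0;j,1)$ with $i\leqslant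 j$; bottom arrows are those of the form $(i,0;j,0)$ with $i<j$. *)

(* Defs.v *)
From mathcomp Require Import all_boot all_fingroup all_solvable.
Set Implicit Arguments. Unset Strict Implicit. Unset Printing Implicit Defensive.
Local Open Scope group_scope.

Section TransferSystems.
Variable gT : finGroupType.

(* An arrow is a pair (H, K) of subgroups; we store arbitrary pairs and
   require H <= K <= G where needed. *)
Definition arrow := ({group gT} * {group gT})%type.

Definition is_arrow (G : {group gT}) (a : arrow) : bool :=
  (a.1 \subset a.2) && (a.2 \subset G).

Definition is_identity (a : arrow) : bool := a.1 == a.2.

Definition transfer_system (G : {group gT}) (T : {set arrow}) : Prop :=
  [/\ (forall a, a \in T -> is_arrow G a),
      (forall H : {group gT}, H \subset G -> (H, H) \in T),
      (forall H K L : {group gT}, (H, K) \in T -> (K, L) \in T -> (H, L) \in T),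
      (forall (H K : {group gT}) (g : gT), (H, K) \in T -> g \in G ->
          ((H :^ g)%G, (K :^ g)%G) \in T) &
      (forall H K L : {group gT}, (H, K) \in T -> L \subset K ->
          ((H :&: L)%G, L) \in T)].

Definition generated (G : {group gT}) (S : {set arrow}) (a : arrow) : Prop :=
  forall T : {set arrow}, transfer_system G T -> S \subset T -> a \in T.

Definition minimal_generating_set (G : {group gT}) (S T : {set arrow}) : Prop :=
  [/\ (forall s, s \in S -> is_arrow G s && ~~ is_identity s),
      (forall a, generated G S a <-> a \in T) &
      (forall s, s \in S -> ~ (forall a, generated G (S :\ s) a <-> a \in T))].

(* Classification of arrows in C_{p^n q} according to whether q divides the
   orders of the source and target:  top = (i,1;j,1) with i<j,
   diagonal = (i,0;j,1), bottom = (i,0;j,0) with i<j. *)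
Definition top_arrow (q : nat) (a : arrow) : bool :=
  [&& q %| #|a.1|, q %| #|a.2| & a.1 != a.2].
Definition diagonal_arrow (q : nat) (a : arrow) : bool :=
  ~~ (q %| #|a.1|) && (q %| #|a.2|).
Definition bottom_arrow (q : nat) (a : arrow) : bool :=
  [&& ~~ (q %| #|a.1|), ~~ (q %| #|a.2|) & a.1 != a.2].

End TransferSystems.

(* Main.v *)
Require Import Defs.
From mathcomp Require Import all_boot all_fingroup all_solvable.
From mathcomp Require Import zify.
From Stdlib Require Import Classical ClassicalEpsilon.
Require Import Defs.
Set Implicit Arguments. Unset Strict Implicit. Unset Printing Implicit Defensive.

Lemma nt_decomp p q n d : prime p -> prime q -> p != q -> d %| p ^ n * q ->
  d = p ^ (logn p d) * q ^ (q %| d) /\ logn p d <= n.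
Proof.
move=> pp pq npq dd.
have Pp := prime_gt0 pp; have Pq := prime_gt0 pq.
have M0 : 0 < p ^ n * q by rewrite muln_gt0 expn_gt0 Pp Pq.
have d0 : 0 < d by apply: dvdn_gt0 M0 dd.
have lM r : logn r (p ^ n * q) = n * (r == p) + (r == q).
  by rewrite lognM ?expn_gt0 ?Pp // lognX (logn_prime r pp) (logn_prime r pq).
split; last first.
  by have := dvdn_leq_log p M0 dd; rewrite lM eqxx (negbTE npq) /=; lia.
apply: eqn_from_log => // [|r].
  by rewrite muln_gt0 !expn_gt0 Pp Pq.
rewrite lognM ?expn_gt0 ?Pp ?Pq // !lognX (logn_prime r pp) (logn_prime r pq).
have := dvdn_leq_log r M0 dd; rewrite lM.
case: (eqVneq r p) => [->|nrp].
  by rewrite (negbTE npq) /= => _; lia.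
case: (eqVneq r q) => [->|nrq] /=; last by lia.
move=> H.
have: (0 < logn q d) = (q %| d) by rewrite logn_gt0 mem_primes pq d0.
case: (q %| d) => /=; lia.
Qed.

Local Open Scope group_scope.

Section SubG.
Variable gT : finGroupType.
Variable G : {group gT}.
Variables p q n : nat.
Hypothesis pp : prime p.
Hypothesis pq : prime q.
Hypothesis npq : p != q.
Hypothesis cycG : cyclic G.
Hypothesis oG : #|G| = (p ^ n * q)%N.
Variable g : gT.
Hypothesis defG : G :=: <[g]>.

Definition Sub (a : nat) (x : bool) : {group gT} :=
  <[g ^+ (#|G| %/ (p ^ a * q ^ x))]>%G.

Lemma SubG a x : Sub a x \subset G.
Proof. by rewrite /Sub /= cycle_subG defG mem_cycle. Qed.

Lemma dvdS a (x : bool) : a <= n -> (p ^ a * q ^ x %| #|G|)%N.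
Proof.
move=> an; rewrite oG; apply: dvdn_mul; first by rewrite dvdn_exp2l.
by case: x; rewrite ?expn1 ?expn0 ?dvd1n.
Qed.

Lemma card_Sub a x : a <= n -> #|Sub a x| = (p ^ a * q ^ x)%N.
Proof.
move=> an; rewrite /Sub /= -orderE orderXdiv; last first.
  by rewrite orderE -defG dvdn_div // dvdS.
rewrite orderE -defG divnA ?dvdS // mulKn // oG muln_gt0 expn_gt0 !prime_gt0.
Qed.

Lemma Pgt0 : 0 < p. Proof. exact: prime_gt0. Qed.
Lemma Qgt0 : 0 < q. Proof. exact: prime_gt0. Qed.

Lemma logn_pq a (x : bool) : logn p (p ^ a * q ^ x) = a.
Proof.
rewrite lognM ?expn_gt0 ?Pgt0 ?Qgt0 // !lognX (logn_prime p pp) (logn_prime p pq).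
by rewrite eqxx (negbTE npq); lia.
Qed.

Lemma q_dvd a (x : bool) : (q %| p ^ a * q ^ x) = x.
Proof.
case: x; first by rewrite expn1 dvdn_mull.
rewrite expn0 muln1 Euclid_dvdX //; apply/negP => /andP [H _].
by move: H; rewrite dvdn_prime2 // eq_sym (negbTE npq).
Qed.

Lemma Sub_sub a x b y : a <= n -> b <= n ->
  (Sub a x \subset Sub b y) = (a <= b) && (x <= y).
Proof.
move=> an bn; rewrite -(cardSg_cyclic cycG) ?SubG // !card_Sub //.
apply/idP/idP.
  move=> H; apply/andP; split.
    have := dvdn_leq_log p _ H; rewrite !logn_pq; apply.
    by rewrite muln_gt0 !expn_gt0 Pgt0 Qgt0.
  case: x H => //= H.
  have qd : q %| p ^ a * q ^ true by rewrite q_dvd.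
  by have := dvdn_trans qd H; rewrite q_dvd; case: (y: bool).
case/andP=> ab xy; apply: dvdn_mul; first by rewrite dvdn_exp2l.
by case: x y xy => [] [].
Qed.

Lemma Sub_inj a x b y : a <= n -> b <= n -> Sub a x = Sub b y -> a = b /\ x = y.
Proof.
move=> an bn E.
have := Sub_sub x y an bn; have := Sub_sub y x bn an.
rewrite E subxx => /esym /andP [h1 h2] /esym /andP [h3 h4].
by split; [lia | case: x y h2 h4 {E} => [] []].
Qed.

Lemma Sub_class (H : {group gT}) : H \subset G ->
  H = Sub (logn p #|H|) (q %| #|H|) /\ logn p #|H| <= n.
Proof.
move=> sHG.
have dH : #|H| %| p ^ n * q by rewrite -oG cardSg.
have [E ln] := nt_decomp pp pq npq dH.
split=> //; apply/val_inj/eqP => /=.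
rewrite (eq_subG_cyclic cycG) ?SubG // card_Sub //.
by rewrite {1}E.
Qed.

Lemma lv_Sub a x : a <= n -> logn p #|Sub a x| = a.
Proof. by move=> an; rewrite card_Sub // logn_pq. Qed.

Lemma hq_Sub a x : a <= n -> (q %| #|Sub a x|) = x.
Proof. by move=> an; rewrite card_Sub // q_dvd. Qed.

Lemma Sub_meet a x c z : a <= n -> c <= n ->
  (Sub a x :&: Sub c z)%G = Sub (minn a c) (x && z).
Proof.
move=> an cn.
set H := (Sub a x :&: Sub c z)%G.
have sIG : H \subset G by rewrite subIset // SubG.
have [E ln] := Sub_class sIG.
have mn : minn a c <= n by lia.
have s1 : H \subset Sub a x by rewrite subsetIl.
have s2 : H \subset Sub c z by rewrite subsetIr.
have s3 : Sub (minn a c) (x && z) \subset H.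
  rewrite subsetI !Sub_sub //; apply/andP; split; apply/andP; split; try lia;
  by case: x; case: z.
rewrite E Sub_sub // in s1; rewrite E Sub_sub // in s2; rewrite E Sub_sub // in s3.
rewrite E; move: s1 s2 s3 => /andP [h1 h2] /andP [h3 h4] /andP [h5 h6].
have -> : logn p #|H| = minn a c by lia.
clearbody H; by congr Sub; move: h2 h4 h6; case: (q %| #|H|); case: x; case: z.
Qed.


Lemma Sub_le a (x : bool) b (y : bool) : a <= b -> x <= y -> b <= n -> Sub a x \subset Sub b y.
Proof. by move=> ab xy bn; rewrite Sub_sub ?ab ?xy //; lia. Qed.

Variables T S : {set arrow gT}.
Hypothesis tsT : transfer_system G T.
Hypothesis mgs : minimal_generating_set G S T.

Notation gen Y H K := (generated G Y (H, K)).

Lemma gen_base (Y : {set arrow gT}) s : s \in Y -> generated G Y s.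
Proof. by move=> sY T' _ /subsetP; apply. Qed.

Lemma gen_mono (Y Y' : {set arrow gT}) a : Y \subset Y' -> generated G Y a -> generated G Y' a.
Proof. by move=> sY H T' tsT' sT'; apply: H => //; apply: subset_trans sT'. Qed.

Lemma gen_comp (Y : {set arrow gT}) (H K L : {group gT}) : gen Y H K -> gen Y K L -> gen Y H L.
Proof. by move=> h1 h2 T' tsT' sT'; case: (tsT') => _ _ c _ _; apply: c; [apply: h1|apply: h2]. Qed.

Lemma gen_id (Y : {set arrow gT}) (H : {group gT}) : H \subset G -> gen Y H H.
Proof. by move=> sHG T' tsT' _; case: tsT' => _ i _ _ _; apply: i. Qed.

Lemma gen_res (Y : {set arrow gT}) (H K L : {group gT}) : gen Y H K -> L \subset K -> gen Y (H :&: L)%G L.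
Proof. by move=> h sLK T' tsT' sT'; case: (tsT') => _ _ _ _ r; apply: (r H K L) => //; apply: h. Qed.

Lemma genR (Y : {set arrow gT}) a (x : bool) b (y : bool) c (z : bool) : gen Y (Sub a x) (Sub b y) -> a <= n -> b <= n ->
  c <= b -> z <= y -> gen Y (Sub (minn a c) (x && z)) (Sub c z).
Proof.
move=> h an bn cb zy; rewrite -Sub_meet //; last by lia.
by apply: gen_res h _; apply: Sub_le.
Qed.

Lemma genRk (Y : {set arrow gT}) a (x : bool) b (y : bool) c (z : bool) : gen Y (Sub a x) (Sub b y) -> a <= c -> c <= b -> b <= n ->
  z <= y -> x <= z -> gen Y (Sub a x) (Sub c z).
Proof.
move=> h ac cb bn zy xz; have := genR h _ bn cb zy.
have -> : minn a c = a by lia.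
have -> : x && z = x by move: xz; clear; case: x; case: z.
by apply; lia.
Qed.

Lemma genRd (Y : {set arrow gT}) a (x : bool) b (y : bool) c : gen Y (Sub a x) (Sub b y) -> a <= c -> c <= b -> b <= n ->
  gen Y (Sub a false) (Sub c false).
Proof.
move=> h ac cb bn; have := genR (z := false) h _ bn cb.
have -> : minn a c = a by lia.
rewrite andbF; apply; [lia | by []].
Qed.

Lemma genI (Y : {set arrow gT}) a x : a <= n -> gen Y (Sub a x) (Sub a x).
Proof. by move=> _; apply: gen_id; apply: SubG. Qed.

Lemma nonred s : s \in S -> ~ generated G (S :\ s) s.
Proof.
case: mgs => _ m2 m3 sS H; apply: (m3 s sS) => a; rewrite -m2; split.
  by apply: gen_mono; apply: subsetDl.
move=> Ha T' tsT' sT'; apply: Ha => //; apply/subsetP => t tS.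
case: (eqVneq t s) => [->|nts]; first by apply: H.
by apply: (subsetP sT'); rewrite !inE nts.
Qed.

Lemma S_coord s : s \in S -> exists a x b y,
  [/\ s = (Sub a x, Sub b y), a <= b, b <= n, x <= y & (a != b) || (x != y)].
Proof.
case: mgs => m1 _ _ sS; case/andP: (m1 s sS) => /andP [s12 s2G] nid.
have s1G : s.1 \subset G by apply: subset_trans s2G.
have [E1 l1] := Sub_class s1G; have [E2 l2] := Sub_class s2G.
exists (logn p #|s.1|), (q %| #|s.1|), (logn p #|s.2|), (q %| #|s.2|).
have : Sub (logn p #|s.1|) (q %| #|s.1|) \subset Sub (logn p #|s.2|) (q %| #|s.2|).
  by rewrite -E1 -E2.
rewrite Sub_sub // => /andP [h1 h2].
split => //; first by rewrite -E1 -E2; case: (s).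
rewrite -negb_and; apply/negP => /andP [/eqP e1 /eqP e2].
by move: nid; rewrite /is_identity E1 E2 e1 e2 eqxx.
Qed.

Lemma same_src a (x : bool) j j' (y : bool) : (Sub a x, Sub j y) \in S -> (Sub a x, Sub j' y) \in S ->
  a <= j -> j < j' -> j' <= n -> x <= y -> False.
Proof.
move=> s1 s2 aj jj j'n xy.
apply: (nonred s1); apply: (genRk (y := y) (b := j')) => //; last by lia.
apply: gen_base; rewrite !inE s2 andbT.
apply/eqP => /(congr1 snd) /= E; have [] := @Sub_inj j' y j y j'n _ E; lia.
Qed.

Definition bP (P : Prop) : bool := if excluded_middle_informative P then true else false.
Lemma bPE (P : Prop) : bP P <-> P.
Proof. by rewrite /bP; case: excluded_middle_informative. Qed.

Definition rP lo j (R : nat -> Prop) : pred nat := fun u => (u == j) || (lo <= u) && bP (R u).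
Lemma rP_ex lo j R : exists u, rP lo j R u.
Proof. by exists j; rewrite /rP eqxx. Qed.
Definition rmin lo j R := ex_minn (rP_ex lo j R).

Lemma rmin_spec lo j (R : nat -> nat -> Prop) : lo <= j -> R j j ->
  (forall w r, lo <= w -> w < r -> r <= j -> R w r -> R r j -> R w j) ->
  let r := rmin lo j (R ^~ j) in
  [/\ lo <= r, r <= j, R r j & forall w, lo <= w -> w < r -> ~ R w r].
Proof.
move=> loj Rjj tr /=; rewrite /rmin; case: ex_minnP => r Pr minr.
have rj : r <= j by apply: minr; rewrite /rP eqxx.
have [lor Rr] : lo <= r /\ R r j.
  by case/orP: Pr => [/eqP -> //| /andP [h /bPE h']].
split => // w low wr Rw; have : r <= w; last by lia.
apply: minr; rewrite /rP low; apply/orP; right; apply/bPE.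
by apply: tr Rw Rr; lia.
Qed.

Definition Eset (P : pred (arrow gT)) (k : nat) := [set s in S | P s && (k <= logn p #|s.1|)].
Definition Lset (P : pred (arrow gT)) (k : nat) := [set s in S | P s && (logn p #|s.1| == k)].

Lemma lvS s : s \in S -> logn p #|s.1| <= n.
Proof.
case/S_coord => a [x [b [y [-> ab bn _ _]]]] /=; rewrite lv_Sub; lia.
Qed.

Lemma E_split P k : #|Eset P k| = #|Eset P k.+1| + #|Lset P k|.
Proof.
have -> : Eset P k = Eset P k.+1 :|: Lset P k.
  apply/setP => s; rewrite !inE.
  case: (s \in S) => //=; case: (P s) => //=; case: ltngtP => //=.
rewrite cardsU; suff -> : Eset P k.+1 :&: Lset P k = set0 by rewrite cards0 subn0.
apply/setP => s; rewrite !inE; case: (s \in S) (P s) => [] [] //=.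
by case: ltngtP.
Qed.

Lemma E_top P : #|Eset P n.+1| = 0.
Proof.
apply/eqP; rewrite cards_eq0; apply/eqP/setP => s; rewrite !inE.
case sS: (s \in S) => //=; have := lvS sS; case: (P s) => //=; lia.
Qed.

Lemma E_sub P k : Eset P k.+1 \subset Eset P k.
Proof. by apply/subsetP => s; rewrite !inE => /andP [-> /andP [-> h]] /=; apply: ltnW. Qed.

Lemma E_subS P (k : nat) s : s \in Lset P k -> Eset P k.+1 \subset S :\ s.
Proof.
rewrite inE => /andP [_ /andP [_ /eqP ls]].
apply/subsetP => t; rewrite !inE => /andP [-> /andP [_ h]]; rewrite andbT.
by apply/eqP => ets; move: h; rewrite ets ls ltnn.
Qed.

Lemma L_E P (k : nat) s : s \in Lset P k -> s \in Eset P k.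
Proof. by rewrite !inE => /andP [-> /andP [-> /eqP ->]] /=. Qed.

Definition NR (P : pred (arrow gT)) (Rel : {set arrow gT} -> nat -> nat -> Prop) (hb : bool) k (v : nat) : Prop :=
  (v <= n /\ exists u, [/\ k <= u, u < v & Rel (Eset P k) u v]) \/
  (hb /\ v = n.+1 /\ exists u w, [/\ k <= u, u <= w, w <= n & gen (Eset P k) (Sub u false) (Sub w true)]).

Definition Nset P Rel hb k : {set 'I_n.+2} := [set v : 'I_n.+2 | bP (NR P Rel hb k v)].

Lemma inN P Rel hb k (v : 'I_n.+2) : (v \in Nset P Rel hb k) <-> NR P Rel hb k v.
Proof. by rewrite inE; apply: bPE. Qed.

Lemma N_mono P (Rel : {set arrow gT} -> nat -> nat -> Prop) hb k :
  (forall (Y Y' : {set arrow gT}) u v, Y \subset Y' -> Rel Y u v -> Rel Y' u v) ->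
  Nset P Rel hb k.+1 \subset Nset P Rel hb k.
Proof.
move=> mono; apply/subsetP => v /inN [[vn [u [h1 h2 h3]]]|[hb1 [vb [u [w [h1 h2 h3 h4]]]]]];
  apply/inN.
  by left; split => //; exists u; split => //; [lia | apply: mono h3; apply: E_sub].
right; split => //; split => //; exists u, w; split => //; first lia.
by apply: gen_mono h4; apply: E_sub.
Qed.

Lemma card_step (V : finType) (A B : {set V}) (L : {set arrow gT}) (f : arrow gT -> V) :
  A \subset B -> {in L, forall s, f s \in B :\: A} -> {in L &, injective f} ->
  #|A| + #|L| <= #|B|.
Proof.
move=> sAB fL finj.
rewrite -(card_in_imset finj).
have dis : A :&: [set f x | x in L] = set0.
  apply/setP => v; rewrite !inE; apply/negP => /andP [vA /imsetP [s sL ev]].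
  by have := fL s sL; rewrite inE -ev vA.
have := cardsUI A [set f x | x in L]; rewrite dis cards0 addn0 => <-.
apply: subset_leq_card; rewrite subUset sAB /=.
by apply/subsetP => v /imsetP [s sL ->]; have := fL s sL; rewrite inE => /andP [].
Qed.

Lemma count_all P Rel hb :
  (forall k, k <= n -> #|Nset P Rel hb k.+1| + #|Lset P k| <= #|Nset P Rel hb k|) ->
  #|Eset P 0| <= #|Nset P Rel hb 0|.
Proof.
move=> step.
suff H : forall d k, k + d = n.+1 -> #|Eset P k| <= #|Nset P Rel hb k|.
  by apply: (H n.+1 0).
elim => [|d IH] k kd.
  have -> : k = n.+1 by lia.
  by rewrite E_top.
rewrite E_split; have := IH k.+1 (ltac:(lia)); have := step k (ltac:(lia)); lia.
Qed.

Lemma L_form P k s : s \in Lset P k -> exists x j y,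
  [/\ s = (Sub k x, Sub j y), k <= j, j <= n, x <= y & (k != j) || (x != y)].
Proof.
move=> sL; have := sL; rewrite inE => /andP [sS /andP [Ps /eqP lk]].
have [a [x [b [y [E ab bn xy nid]]]]] := S_coord sS.
move: lk; rewrite E /= lv_Sub; last by lia.
move=> ak; subst a; exists x, b, y; split => //; by rewrite -E.
Qed.

Lemma typT a x b y : a <= n -> b <= n ->
  top_arrow q (Sub a x, Sub b y) = [&& x, y & Sub a x != Sub b y].
Proof. by move=> an bn; rewrite /top_arrow /= !hq_Sub. Qed.
Lemma typB a x b y : a <= n -> b <= n ->
  bottom_arrow q (Sub a x, Sub b y) = [&& ~~ x, ~~ y & Sub a x != Sub b y].
Proof. by move=> an bn; rewrite /bottom_arrow /= !hq_Sub. Qed.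
Lemma typD a x b y : a <= n -> b <= n ->
  diagonal_arrow q (Sub a x, Sub b y) = ~~ x && y.
Proof. by move=> an bn; rewrite /diagonal_arrow /= !hq_Sub. Qed.

Lemma inord_eq a b : a <= n -> b <= n -> inord a = inord b :> 'I_n.+2 -> a = b.
Proof.
move=> an bn E; have := congr1 (@nat_of_ord _) E; rewrite !inordK //; lia.
Qed.

Lemma kill_bot (Y : {set arrow gT}) k j r (x' : bool) j' (y' : bool) :
  (Sub k false, Sub j false) \in S -> Y \subset S :\ (Sub k false, Sub j false) ->
  gen Y (Sub r false) (Sub j false) ->
  gen (S :\ (Sub k false, Sub j false)) (Sub k x') (Sub j' y') ->
  k <= r -> r <= j' -> j' <= n -> False.
Proof.
move=> sS sY Rr g' kr rj jn.
apply: (nonred sS); apply: (gen_comp (K := Sub r false)).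
  by apply: (genRd g').
by apply: gen_mono Rr.
Qed.

Definition Rel1 (Y : {set arrow gT}) u v : Prop := gen Y (Sub u false) (Sub v false).
Lemma Rel1_mono (Y Y' : {set arrow gT}) u v : Y \subset Y' -> Rel1 Y u v -> Rel1 Y' u v.
Proof. exact: gen_mono. Qed.

Lemma rB_spec P k j : k < j -> j <= n ->
  let r := rmin k.+1 j (fun u => Rel1 (Eset P k.+1) u j) in
  [/\ k < r, r <= j, Rel1 (Eset P k.+1) r j &
      forall w, k < w -> w < r -> ~ Rel1 (Eset P k.+1) w r].
Proof.
move=> kj jn; apply: (rmin_spec (R := Rel1 (Eset P k.+1))) => //.
  by apply: genI.
by move=> w r _ _ _ h1 h2; apply: gen_comp h1 h2.
Qed.

Definition P1 : pred (arrow gT) := fun s => top_arrow q s || bottom_arrow q s.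
Definition N1 k := Nset P1 Rel1 false k.
Definition f1 k (s : arrow gT) : 'I_n.+2 :=
  inord (rmin k.+1 (logn p #|s.2|) (fun u => Rel1 (Eset P1 k.+1) u (logn p #|s.2|))).

Lemma L1_form k s : s \in Lset P1 k -> exists x j, [/\ s = (Sub k x, Sub j x), k < j & j <= n].
Proof.
move=> sL; have [x [j [y [E kj jn xy nid]]]] := L_form sL.
have := sL; rewrite inE => /andP [_ /andP [Ps _]].
move: Ps; rewrite /P1 E typT ?typB //; try lia; move=> Ps.
have exy : x = y by move: Ps; case: (x : bool); case: (y : bool).
subst y; rewrite eqxx orbF in nid.
by exists x, j; split => //; lia.
Qed.

Lemma LS P k s : s \in Lset P k -> s \in S.
Proof. by rewrite inE => /andP []. Qed.

Lemma step1 k : k <= n -> #|N1 k.+1| + #|Lset P1 k| <= #|N1 k|.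
Proof.
move=> kn; apply: (@card_step _ (N1 k.+1) (N1 k) (Lset P1 k) (f1 k)).
- exact: (N_mono P1 false k Rel1_mono).
- move=> s sL; have [x [j [E kj jn]]] := L1_form sL.
  rewrite /f1 E /= lv_Sub //.
  have [kr rj Rr root] := rB_spec P1 kj jn.
  move: (rmin _ _ _) kr rj Rr root => r kr rj Rr root.
  have ri : nat_of_ord (inord r : 'I_n.+2) = r by rewrite inordK //; lia.
  rewrite inE; apply/andP; split.
    apply/negP => /inN [[_ [u [h1 h2 h3]]] | [//]].
    by rewrite ri in h2 h3; apply: (root u) h3.
  apply/inN; left; rewrite ri.
  split; first lia.
  exists k; split => //.
  apply: (genRd (x := x) (b := j) (y := x)) => //; last lia.
  by apply: gen_base; rewrite -E; apply: L_E.
- move=> s s' sL s'L.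
  have [x [j [E kj jn]]] := L1_form sL; have [x' [j' [E' kj' jn']]] := L1_form s'L.
  rewrite /f1 E E' /= !lv_Sub //.
  have [kr rj Rr root] := rB_spec P1 kj jn.
  have [kr' rj' Rr' root'] := rB_spec P1 kj' jn'.
  move: (rmin _ _ (fun u => Rel1 _ u j)) kr rj Rr root => r kr rj Rr root.
  move: (rmin _ _ (fun u => Rel1 _ u j')) kr' rj' Rr' root' => r' kr' rj' Rr' root'.
  move/inord_eq => req; have {}req : r = r' by apply: req; lia.
  subst r'.
  have sS := LS sL; have s'S := LS s'L.
  have sY := E_subS sL; have s'Y := E_subS s'L.
  rewrite E in sS sY; rewrite E' in s'S s'Y.
  case: (eqVneq (Sub k x, Sub j x) (Sub k x', Sub j' x')) => [-> // | neq]; exfalso.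
  clear E E' sL s'L.
  case: (eqVneq x x') => [exx|nxx].
    subst x'; case: (ltngtP j j') => [jj|jj|jj].
    + by apply: (same_src sS s'S) => //; lia.
    + by apply: (same_src s'S sS) => //; lia.
    + by subst j'; rewrite eqxx in neq.
  case: x nxx neq sS sY Rr => nxx neq sS sY Rr.
    have x'f : x' = false by case: x' nxx {neq s'S s'Y}.
    subst x'; apply: (kill_bot s'S s'Y Rr' (x' := true) (j' := j) (y' := true)) => //; last lia.
    by apply: gen_base; rewrite !inE sS andbT neq.
  have x't : x' = true by case: x' nxx {neq s'S s'Y}.
  subst x'; apply: (kill_bot sS sY Rr (x' := true) (j' := j') (y' := true)) => //; last lia.
  by apply: gen_base; rewrite !inE s'S andbT eq_sym neq.
Qed.

Lemma inord_eq2 a b : a <= n.+1 -> b <= n.+1 -> inord a = inord b :> 'I_n.+2 -> a = b.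
Proof.
move=> an bn E; have := congr1 (@nat_of_ord _) E; rewrite !inordK //; lia.
Qed.

Lemma bot_diag P (Rel : {set arrow gT} -> nat -> nat -> Prop) hb k : k <= n ->
  ord_max \in Nset P Rel hb k.+1 -> gen (Eset P k.+1) (Sub k false) (Sub k true).
Proof.
move=> kn /inN [[h _]|[_ [_ [u [w [h1 h2 h3 h4]]]]]]; first by move: h => /=; lia.
have := genR (c := k) (z := true) h4; rewrite andFb.
have -> : minn u k = k by lia.
by apply; lia.
Qed.

Lemma le_nS a b : a <= b -> b <= n -> a <= n.+1.
Proof. by move=> h1 h2; apply: leq_trans (leqnSn n); apply: leq_trans h2. Qed.

Lemma inord_max : inord n.+1 = ord_max :> 'I_n.+2.
Proof. by apply: val_inj; rewrite /= inordK. Qed.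

Definition P3 : pred (arrow gT) := fun s => bottom_arrow q s || diagonal_arrow q s.
Definition N3 k := Nset P3 Rel1 true k.
Definition g3 k (s : arrow gT) : nat :=
  if diagonal_arrow q s && (ord_max \notin N3 k.+1) then n.+1 else
  rmin k.+1 (logn p #|s.2|) (fun u => Rel1 (Eset P3 k.+1) u (logn p #|s.2|)).
Definition f3 k (s : arrow gT) : 'I_n.+2 := inord (g3 k s).

Lemma L3_form k s : s \in Lset P3 k -> exists (y : bool) j,
  [/\ s = (Sub k false, Sub j y), k <= j, j <= n, y || (k < j) & diagonal_arrow q s = y].
Proof.
move=> sL; have [x [j [y [E kj jn xy nid]]]] := L_form sL.
have := sL; rewrite inE => /andP [_ /andP [Ps _]].
move: Ps; rewrite /P3 E typD ?typB //; try lia; move=> Ps.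
have xf : x = false by move: Ps; case: (x : bool).
subst x; exists y, j; split => //.
by move: nid; case: (y : bool) => //=; rewrite orbF; lia.
Qed.

Lemma diag_nonred P k : k <= n -> (Sub k false, Sub k true) \in Lset P k ->
  gen (Eset P k.+1) (Sub k false) (Sub k true) -> False.
Proof.
move=> kn sL h; apply: (nonred (LS sL)); apply: gen_mono h; exact: E_subS.
Qed.

Lemma step3 k : k <= n -> #|N3 k.+1| + #|Lset P3 k| <= #|N3 k|.
Proof.
move=> kn; apply: (@card_step _ (N3 k.+1) (N3 k) (Lset P3 k) (f3 k)).
- exact: (N_mono P3 true k Rel1_mono).
- move=> s sL; have [y [j [E kj jn yk dy]]] := L3_form sL.
  rewrite /f3 /g3 dy.
  case: ifP => [/andP [yt nb] | hb].
    rewrite inord_max inE nb /=; apply/inN; right; split => //; split => //.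
    exists k, j; split => //; rewrite -yt -E; apply: gen_base; exact: L_E.
  have kj' : k < j.
    case: y yk dy E hb => //= _ _ E /negbFE hb; rewrite ltn_neqAle kj andbT.
    apply/negP => /eqP ekj; subst j; apply: (diag_nonred (P := P3) kn).
      by rewrite -E.
    exact: bot_diag hb.
  rewrite E /= lv_Sub //.
  have [kr rj Rr root] := rB_spec P3 kj' jn.
  move: (rmin _ _ _) kr rj Rr root => r kr rj Rr root.
  have ri : nat_of_ord (inord r : 'I_n.+2) = r by rewrite inordK //; lia.
  rewrite inE; apply/andP; split.
    apply/negP => /inN [[_ [u [h1 h2 h3]]] | [_ [h _]]].
      by rewrite ri in h2 h3; apply: (root u) h3.
    by move: h; rewrite ri; lia.
  apply/inN; left; rewrite ri.
  split; first lia.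
  exists k; split => //.
  apply: (genRd (x := false) (b := j) (y := y)) => //; last lia.
  by apply: gen_base; rewrite -E; apply: L_E.
- suff H : forall s s', s \in Lset P3 k -> s' \in Lset P3 k -> f3 k s = f3 k s' ->
      s != s' -> ~~ diagonal_arrow q s -> diagonal_arrow q s' -> False.
    move=> s s' sL s'L fe; apply/eqP/negPn/negP => neq.
    have [y [j [E kj jn yk dy]]] := L3_form sL.
    have [y' [j' [E' kj' jn' yk' dy']]] := L3_form s'L.
    case: (eqVneq y y') => [eyy|nyy].
      move: E'; rewrite -eyy => E'.
      have sS := LS sL; have s'S := LS s'L; rewrite E in sS; rewrite E' in s'S.
      rewrite E E' in neq.
      case: (ltngtP j j') => [jj|jj|jj].
      + by apply: (same_src sS s'S) => //; lia.
      + by apply: (same_src s'S sS) => //; lia.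
      + by subst j'; rewrite eqxx in neq.
    have [yt|yf] : y = true \/ y = false by case: (y : bool); [left|right].
      have y'f : y' = false by move: nyy; rewrite yt; case: (y' : bool).
      apply: (H s' s s'L sL (esym fe)); [by rewrite eq_sym | by rewrite dy' y'f | by rewrite dy yt].
    have y't : y' = true by move: nyy; rewrite yf; case: (y' : bool).
    by apply: (H s s' sL s'L fe neq); [rewrite dy yf | rewrite dy' y't].
  move=> s s' sL s'L fe neq ds ds'.
  have [y [j [E kj jn yk dy]]] := L3_form sL.
  have [y' [j' [E' kj' jn' yk' dy']]] := L3_form s'L.
  move: ds ds'; rewrite dy dy' => /negbTE yf y't; rewrite yf in E yk dy; rewrite y't in E' yk' dy'.
  have kj2 : k < j by move: yk.
  move: fe; rewrite /f3 /g3 dy dy' /= E E' !lv_Sub //.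
  have [kr rj Rr root] := rB_spec P3 kj2 jn.
  move: (rmin _ _ (fun u => Rel1 _ u j)) kr rj Rr root => r kr rj Rr root.
  case: ifP => [_|hb] fe.
    have := @inord_eq2 r n.+1 (le_nS rj jn) (leqnn _) fe => e.
    by move: (leq_trans rj jn); rewrite e ltnn.
  have kj3 : k < j'.
    rewrite ltn_neqAle kj' andbT; apply/negP => /eqP ekj; subst j'.
    apply: (diag_nonred (P := P3) kn); first by rewrite -E'.
    by apply: (bot_diag (Rel := Rel1) (hb := true) kn); move: hb => /negbFE.
  have [kr' rj' Rr' root'] := rB_spec P3 kj3 jn'.
  move: (rmin _ _ (fun u => Rel1 _ u j')) fe kr' rj' Rr' root' => r' fe kr' rj' Rr' root'.
  have req : r = r' := @inord_eq2 r r' (le_nS rj jn) (le_nS rj' jn') fe.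
  subst r'.
  have sS := LS sL; have s'S := LS s'L; have sY := E_subS sL.
  rewrite E in sS sY; rewrite E' in s'S.
  have g' : gen (S :\ (Sub k false, Sub j false)) (Sub k false) (Sub j' true).
    by apply: gen_base; rewrite !inE s'S andbT -E -E' eq_sym.
  exact: (kill_bot sS sY Rr g' (ltnW kr) rj' jn').
Qed.

Definition Rel2 (Y : {set arrow gT}) u v : Prop :=
  gen Y (Sub u true) (Sub v true) \/ gen Y (Sub u false) (Sub v true).
Lemma Rel2_mono (Y Y' : {set arrow gT}) u v : Y \subset Y' -> Rel2 Y u v -> Rel2 Y' u v.
Proof. by move=> sY [h|h]; [left|right]; apply: gen_mono h. Qed.

Lemma Rel2_trans (Y : {set arrow gT}) w r j : w <= r -> r <= j -> j <= n ->
  Rel2 Y w r -> Rel2 Y r j -> Rel2 Y w j.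
Proof.
move=> wr rj jn h1 [h2|h2].
  by case: h1 => h1; [left|right]; apply: gen_comp h1 h2.
right; apply: (gen_comp (K := Sub r false)) h2.
have rn : r <= n by apply: leq_trans jn.
by case: h1 => h1; apply: (genRd h1).
Qed.

Lemma rT_spec P k j : k < j -> j <= n ->
  let r := rmin k.+1 j (fun u => Rel2 (Eset P k.+1) u j) in
  [/\ k < r, r <= j, Rel2 (Eset P k.+1) r j &
      forall w, k < w -> w < r -> ~ Rel2 (Eset P k.+1) w r].
Proof.
move=> kj jn; apply: (rmin_spec (R := Rel2 (Eset P k.+1))) => //.
  by left; apply: genI.
move=> w r _ wr rj h1 h2; apply: Rel2_trans h1 h2 => //; exact: ltnW.
Qed.

Definition P2 : pred (arrow gT) := fun s => top_arrow q s || diagonal_arrow q s.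
Definition N2 k := Nset P2 Rel2 true k.
Definition g2 k (s : arrow gT) : nat :=
  if diagonal_arrow q s && (ord_max \notin N2 k.+1) then n.+1 else
  rmin k.+1 (logn p #|s.2|) (fun u => Rel2 (Eset P2 k.+1) u (logn p #|s.2|)).
Definition f2 k (s : arrow gT) : 'I_n.+2 := inord (g2 k s).

Lemma L2_form k s : s \in Lset P2 k -> exists (x : bool) j,
  [/\ s = (Sub k x, Sub j true), k <= j, j <= n, ~~ x || (k < j) & diagonal_arrow q s = ~~ x].
Proof.
move=> sL; have [x [j [y [E kj jn xy nid]]]] := L_form sL.
have := sL; rewrite inE => /andP [_ /andP [Ps _]].
move: Ps; rewrite /P2 E typD ?typT //; try lia; move=> Ps.
have yt : y = true by move: Ps; case: (y : bool); rewrite ?andbF.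
subst y; exists x, j; split; rewrite ?andbT //.
by move: nid; case: (x : bool) => //=; rewrite orbF; lia.
Qed.

Lemma step2 k : k <= n -> #|N2 k.+1| + #|Lset P2 k| <= #|N2 k|.
Proof.
move=> kn; apply: (@card_step _ (N2 k.+1) (N2 k) (Lset P2 k) (f2 k)).
- exact: (N_mono P2 true k Rel2_mono).
- move=> s sL; have [x [j [E kj jn yk dy]]] := L2_form sL.
  rewrite /f2 /g2 dy.
  case: ifP => [/andP [nx nb] | hb].
    rewrite inord_max inE nb /=; apply/inN; right; split => //; split => //.
    exists k, j; split => //; move: E; rewrite (negbTE nx) => E.
    rewrite -E; apply: gen_base; exact: L_E.
  have kj' : k < j.
    have [xt|xf] : x = true \/ x = false by case: (x : bool); [left|right].
      by move: yk; rewrite xt.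
    rewrite xf /= in hb; move/negbFE: hb => hb.
    rewrite ltn_neqAle kj andbT.
    apply/negP => /eqP ekj; subst j; apply: (diag_nonred (P := P2) kn).
      by rewrite -xf -E.
    exact: (bot_diag (Rel := Rel2) (hb := true) kn).
  rewrite E (@lv_Sub j true jn).
  have [kr rj Rr root] := rT_spec P2 kj' jn.
  move: (rmin _ _ _) kr rj Rr root => r kr rj Rr root.
  have ri : nat_of_ord (inord r : 'I_n.+2) = r by rewrite inordK //; apply: le_nS rj jn.
  rewrite inE; apply/andP; split.
    apply/negP => /inN [[_ [u [h1 h2 h3]]] | [_ [h _]]].
      by rewrite ri in h2 h3; apply: (root u) h3.
    by move: (leq_trans rj jn); rewrite -ri h ltnn.
  apply/inN; left; rewrite ri.
  split; first exact: leq_trans rj jn.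
  exists k; split => //.
  have h : gen (Eset P2 k) (Sub k x) (Sub r true).
    apply: (genRk (b := j) (y := true) _ (ltnW kr) rj jn (leqnn _)).
      by apply: gen_base; rewrite -E; apply: L_E.
    by case: (x : bool).
  by case: (x : bool) h => h; [left|right].
- suff H : forall s s', s \in Lset P2 k -> s' \in Lset P2 k -> f2 k s = f2 k s' ->
      s != s' -> ~~ diagonal_arrow q s -> diagonal_arrow q s' -> False.
    move=> s s' sL s'L fe; apply/eqP/negPn/negP => neq.
    have [x [j [E kj jn yk dy]]] := L2_form sL.
    have [x' [j' [E' kj' jn' yk' dy']]] := L2_form s'L.
    case: (eqVneq x x') => [exx|nxx].
      move: E'; rewrite -exx => E'.
      have sS := LS sL; have s'S := LS s'L; rewrite E in sS; rewrite E' in s'S.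
      rewrite E E' in neq.
      have xt : x <= true by case: (x : bool).
      case: (ltngtP j j') => [jj|jj|jj].
      + by apply: (same_src sS s'S) => //; apply: ltnW.
      + by apply: (same_src s'S sS) => //; apply: ltnW.
      + by subst j'; rewrite eqxx in neq.
    have [xt|xf] : x = true \/ x = false by case: (x : bool); [left|right].
      have x'f : x' = false by move: nxx; rewrite xt; case: (x' : bool).
      by apply: (H s s' sL s'L fe neq); [rewrite dy xt | rewrite dy' x'f].
    have x't : x' = true by move: nxx; rewrite xf; case: (x' : bool).
    apply: (H s' s s'L sL (esym fe)); [by rewrite eq_sym | by rewrite dy' x't | by rewrite dy xf].
  move=> s s' sL s'L fe neq ds ds'.
  have [x [j [E kj jn yk dy]]] := L2_form sL.
  have [x' [j' [E' kj' jn' yk' dy']]] := L2_form s'L.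
  move: ds ds'; rewrite dy dy' => /negPn xt /negbTE x'f.
  rewrite xt in E yk dy; rewrite x'f in E' yk' dy'.
  have kj2 : k < j by move: yk.
  move: fe; rewrite /f2 /g2 dy dy' /= E E' !lv_Sub //.
  have [kr rj Rr root] := rT_spec P2 kj2 jn.
  move: (rmin _ _ (fun u => Rel2 _ u j)) kr rj Rr root => r kr rj Rr root.
  case: ifP => [_|hb] fe.
    have := @inord_eq2 r n.+1 (le_nS rj jn) (leqnn _) fe => e.
    by move: (leq_trans rj jn); rewrite e ltnn.
  move/negbFE: hb => hb.
  have kj3 : k < j'.
    rewrite ltn_neqAle kj' andbT; apply/negP => /eqP ekj; subst j'.
    apply: (diag_nonred (P := P2) kn); first by rewrite -E'.
    exact: (bot_diag (Rel := Rel2) (hb := true) kn).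
  have [kr' rj' Rr' root'] := rT_spec P2 kj3 jn'.
  move: (rmin _ _ (fun u => Rel2 _ u j')) fe kr' rj' Rr' root' => r' fe kr' rj' Rr' root'.
  have req : r = r' := @inord_eq2 r r' (le_nS rj jn) (le_nS rj' jn') fe.
  subst r'.
  have sS := LS sL; have s'S := LS s'L; have s'Y := E_subS s'L.
  rewrite E in sS; rewrite E' in s'S s'Y.
  have gs : gen (S :\ (Sub k false, Sub j' true)) (Sub k true) (Sub j true).
    by apply: gen_base; rewrite !inE sS andbT -E -E'.
  have dkk : gen (S :\ (Sub k false, Sub j' true)) (Sub k false) (Sub k true).
    apply: gen_mono s'Y _; exact: (bot_diag (Rel := Rel2) (hb := true) kn).
  have rn : r <= n by apply: leq_trans jn.
  have tkr : gen (S :\ (Sub k false, Sub j' true)) (Sub k true) (Sub r true).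
    by apply: (genRk gs) => //; apply: ltnW.
  have dkr := gen_comp dkk tkr.
  apply: (nonred s'S).
  case: Rr' => h; have {}h := gen_mono s'Y h.
    exact: gen_comp dkr h.
  apply: (gen_comp (K := Sub r false)) h.
  by apply: (genRd gs) => //; apply: ltnW.
Qed.

Lemma N0_ord0 P Rel hb : ord0 \notin Nset P Rel hb 0.
Proof.
apply/negP => /inN [[_ [u [_ h _]]] | [_ [h _]]] //.
Qed.

Lemma N0_max P Rel : ord_max \notin Nset P Rel false 0.
Proof.
apply/negP => /inN [[h _] | [//]].
by move: h => /=; rewrite ltnn.
Qed.

Lemma fill (V : finType) (A B : {set V}) v : A \subset B -> #|B| <= #|A| -> v \in B -> v \in A.
Proof.
move=> sAB le vB.
have e : #|A| = #|B| by apply/eqP; rewrite eqn_leq le subset_leq_card.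
by have /(_ sAB) := subset_cardP e => /(_ v) ->.
Qed.

Lemma root0 P (Rel : {set arrow gT} -> nat -> nat -> Prop) hb :
  Rel (Eset P 0) n n ->
  (forall w r, w < r -> r <= n -> Rel (Eset P 0) w r -> Rel (Eset P 0) r n -> Rel (Eset P 0) w n) ->
  (forall v : 'I_n.+2, 0 < v <= n -> v \in Nset P Rel hb 0) -> Rel (Eset P 0) 0 n.
Proof.
move=> refl tr allN.
have [_ rn Rr root] := rmin_spec (leq0n n) refl (fun w r _ => tr w r).
move: (rmin _ _ _) rn Rr root => r rn Rr root.
case: (posnP r) => [r0|rpos]; first by rewrite r0 in Rr.
have ri : nat_of_ord (inord r : 'I_n.+2) = r by rewrite inordK //; apply: le_nS rn _.
have := allN (inord r); rewrite ri rpos rn => /(_ isT) /inN.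
case=> [[_ [u [_ h1 h2]]] | [_ [h _]]].
  by rewrite ri in h1 h2; case: (root u (leq0n u) h1 h2).
by move: rn; rewrite -ri h ltnn.
Qed.

Lemma card_C2 : #|~: [set (ord0 : 'I_n.+2); (ord_max : 'I_n.+2)]| = n.
Proof.
have := cardsC [set ord0; ord_max : 'I_n.+2]; rewrite cards2 card_ord.
suff -> : (ord0 != ord_max :> 'I_n.+2) by move=> /= h; lia.
by apply/eqP => /(congr1 val).
Qed.

Lemma card_C1 : #|~: [set (ord0 : 'I_n.+2)]| = n.+1.
Proof. by have := cardsC [set ord0 : 'I_n.+2]; rewrite cards1 card_ord; lia. Qed.

Lemma N_C1 P Rel hb : Nset P Rel hb 0 \subset ~: [set ord0].
Proof.
apply/subsetP => v vN; rewrite !inE; apply/eqP => e.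
by move: vN; rewrite e (negbTE (N0_ord0 _ _ _)).
Qed.

Lemma N_C2 P Rel : Nset P Rel false 0 \subset ~: [set ord0; ord_max].
Proof.
apply/subsetP => v vN; rewrite !inE negb_or; apply/andP; split; apply/eqP => e;
  move: vN; rewrite e ?(negbTE (N0_ord0 _ _ _)) ?(negbTE (N0_max _ _)) //.
Qed.

Lemma cardU_disj (A B : pred (arrow gT)) : (forall s, A s -> B s -> False) ->
  #|[set a in S | A a]| + #|[set a in S | B a]| = #|Eset (fun s => A s || B s) 0|.
Proof.
move=> dis.
have -> : Eset (fun s => A s || B s) 0 = [set a in S | A a] :|: [set a in S | B a].
  by apply/setP => s; rewrite !inE andbT andb_orr.
rewrite cardsU; suff -> : [set a in S | A a] :&: [set a in S | B a] = set0 by rewrite cards0 subn0.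
apply/setP => s; rewrite !inE; apply/negP => /andP [/andP [_ h1] /andP [_ h2]].
exact: dis h1 h2.
Qed.

Lemma inT a : generated G S a -> a \in T.
Proof. by case: mgs => _ m2 _ /m2. Qed.

Lemma genS P k a : generated G (Eset P k) a -> generated G S a.
Proof. by apply: gen_mono; apply/subsetP => s; rewrite inE => /andP []. Qed.

Lemma one_Sub : (1%G : {group gT}) = Sub 0 false.
Proof.
have [E _] := Sub_class (sub1G G); rewrite [LHS]E cards1 logn1.
by have -> : (q %| 1) = false by rewrite dvdn1; apply/eqP => e; move: pq; rewrite e.
Qed.

Lemma P_Sub (P : {group gT}) : P \subset G -> #|P| = (p ^ n)%N -> P = Sub n false.
Proof.
move=> sPG cP; have [E _] := Sub_class sPG; rewrite [LHS]E cP pfactorK //.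
by have := q_dvd n false; rewrite expn0 muln1 => ->.
Qed.

Lemma G_Sub : G = Sub n true.
Proof.
have [E _] := Sub_class (subxx G); rewrite [LHS]E oG.
have h := logn_pq n true; rewrite expn1 in h; rewrite h.
by have := q_dvd n true; rewrite expn1 => ->.
Qed.

Lemma main_result :
  let nT := #|[set a in S | top_arrow q a]| in
  let nB := #|[set a in S | bottom_arrow q a]| in
  let nD := #|[set a in S | diagonal_arrow q a]| in
  [/\ nT + nB <= n /\
        (nT + nB = n -> forall P : {group gT}, P \subset G -> #|P| = (p ^ n)%N ->
           (1%G, P) \in T),
      nT + nD <= n.+1 /\ (nT + nD = n.+1 -> (1%G, G) \in T) &
      nB + nD <= n.+1 /\
        (nB + nD = n.+1 -> forall P : {group gT}, P \subset G -> #|P| = (p ^ n)%N ->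
           (1%G, P) \in T)].
Proof.
move=> nT nB nD.
have dTB : forall s : arrow gT, top_arrow q s -> bottom_arrow q s -> False.
  by move=> s; rewrite /top_arrow /bottom_arrow => /andP [h _] /andP [h' _]; rewrite h in h'.
have dTD : forall s : arrow gT, top_arrow q s -> diagonal_arrow q s -> False.
  by move=> s; rewrite /top_arrow /diagonal_arrow => /andP [h _] /andP [h' _]; rewrite h in h'.
have dBD : forall s : arrow gT, bottom_arrow q s -> diagonal_arrow q s -> False.
  by move=> s; rewrite /bottom_arrow /diagonal_arrow => /and3P [_ h _] /andP [_ h']; rewrite h' in h.
have c1 : nT + nB = #|Eset P1 0| by apply: cardU_disj.
have c2 : nT + nD = #|Eset P2 0| by apply: cardU_disj.
have c3 : nB + nD = #|Eset P3 0| by apply: cardU_disj.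
have e1 := count_all step1; have e2 := count_all step2; have e3 := count_all step3.
have b1 := subset_leq_card (N_C2 P1 Rel1); rewrite card_C2 in b1.
have b2 := subset_leq_card (N_C1 P2 Rel2 true); rewrite card_C1 in b2.
have b3 := subset_leq_card (N_C1 P3 Rel1 true); rewrite card_C1 in b3.
split; split.
- by rewrite c1; apply: leq_trans e1 b1.
- move=> eq P sPG cP; rewrite one_Sub (P_Sub sPG cP); apply: inT.
  apply: (genS (P := P1) (k := 0)); apply: (root0 (Rel := Rel1) (hb := false)).
  + exact: genI.
  + by move=> w r _ _ h1 h2; apply: gen_comp h1 h2.
  + move=> v /andP [v0 vn]; apply: (fill (N_C2 P1 Rel1)).
      by rewrite card_C2; apply: leq_trans e1; rewrite -c1 eq.
    rewrite !inE negb_or; apply/andP; split; apply/eqP => e; move: v0 vn; rewrite e //=.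
    by rewrite ltnn.
- by rewrite c2; apply: leq_trans e2 b2.
- move=> eq; rewrite one_Sub [X in (_, X)]G_Sub; apply: inT.
  apply: (genS (P := P2) (k := 0)).
  have allN : forall v : 'I_n.+2, v != ord0 -> v \in N2 0.
    move=> v v0; apply: (fill (N_C1 P2 Rel2 true)); first by rewrite card_C1; apply: leq_trans e2; rewrite -c2 eq.
    by rewrite !inE.
  have R0 : Rel2 (Eset P2 0) 0 n.
    apply: (root0 (P := P2) (Rel := Rel2) (hb := true)); first by left; apply: genI.
      by move=> w r wr rn h1 h2; apply: Rel2_trans h1 h2 => //; apply: ltnW.
    by move=> v /andP [v0 vn]; apply (allN v); apply/eqP => e; move: v0; rewrite e.
  have : ord_max \in N2 0 by apply (allN ord_max); apply/eqP => /(congr1 val).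
  move/inN => [[h _]|[_ [_ [u [w [h1 h2 h3 h4]]]]]]; first by move: h => /=; rewrite ltnn.
  have d00 : gen (Eset P2 0) (Sub 0 false) (Sub 0 true).
    have := genR (c := 0) (z := true) h4; rewrite andFb minn0.
    by apply => //; apply: leq_trans h3.
  case: R0 => h; last exact: h.
  exact: gen_comp d00 h.
- by rewrite c3; apply: leq_trans e3 b3.
- move=> eq P sPG cP; rewrite one_Sub (P_Sub sPG cP); apply: inT.
  apply: (genS (P := P3) (k := 0)); apply: (root0 (Rel := Rel1) (hb := true)).
  + exact: genI.
  + by move=> w r _ _ h1 h2; apply: gen_comp h1 h2.
  + move=> v /andP [v0 vn]; apply: (fill (N_C1 P3 Rel1 true)).
      by rewrite card_C1; apply: leq_trans e3; rewrite -c3 eq.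
    by rewrite !inE; apply/eqP => e; move: v0; rewrite e.
Qed.

End SubG.

Theorem lemma6p3 (gT : finGroupType) (G : {group gT}) (p q n : nat)
  (T S : {set arrow gT}) :
  prime p -> prime q -> p != q -> 0 < n ->
  cyclic G -> #|G| = (p ^ n * q)%N ->
  transfer_system G T -> minimal_generating_set G S T ->
  let nT := #|[set a in S | top_arrow q a]| in
  let nB := #|[set a in S | bottom_arrow q a]| in
  let nD := #|[set a in S | diagonal_arrow q a]| in
  [/\ nT + nB <= n /\
        (nT + nB = n -> forall P : {group gT}, P \subset G -> #|P| = (p ^ n)%N ->
           (1%G, P) \in T),
      nT + nD <= n.+1 /\ (nT + nD = n.+1 -> (1%G, G) \in T) &
      nB + nD <= n.+1 /\
        (nB + nD = n.+1 -> forall P : {group gT}, P \subset G -> #|P| = (p ^ n)%N ->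
           (1%G, P) \in T)].
Proof.
move=> pp pq npq n0 cycG oG tsT mgs.
have [g defG] := cyclicP cycG.
exact: (@main_result gT G p q n pp pq npq cycG oG g defG T S mgs).
Qed.
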